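(* Let $\alpha:I\to(0,\infty)$ and $a:I\to\mathbb{R}$ be smooth, and let $v$ be a smooth solution, with values in $I$, of $$v_t+a(v)v_x+\partial_x\big(\alpha(v)\partial_x(\alpha(v)\partial_x v)\big)=0.$$ For every integer $k\geq1$, $v_k:=(\alpha(v)\partial_x)^k v$ satisfies $$\partial_t v_k+a(v)\partial_x v_k+\partial_x\big(\alpha(v)\partial_x(\alpha(v)\partial_x v_k)\big)=f_k\,\partial_x^2 v_k+g_k\,\partial_x v_k+h_k,$$ where: (i) $f_k=(k-1)\alpha'(v)\,v_1=(k-1)\alpha(v)\partial_x(\alpha(v))$; (ii) $g_k=A_k(v)\,v_1^2+B_k(v)\,v_2$ for some continuous functions $A_k,B_k$ on $I$ (built from $\alpha$ and its derivatives), i.e. $g_k$ is of homogeneous weight $2$ in $(v_1,v_2)$; (iii) $h_k$ is a finite sum of terms of the form $\beta(v)\prod_{j=1}^{N}\partial_x^{\gamma_j}v$ with $1\le\gamma_j\le k$ for all $j$, where each $\beta$ is a continuous function on $I$ built from $\alpha$, $a$ and their derivatives, and where the weight $\sum_j\gamma_j$ of each term equals either $k+1$ or $k+3$. (For instance $f_1=g_1=0$, $h_1=-\frac{a'(v)}{\alpha(v)}v_1^2$.)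
   Context: Notation: $\alpha'$ denotes the derivative of the function $\alpha$ with respect to its argument, and $\alpha(v)$, $a(v)$ denote compositions with $v(t,x)$. The weight of a monomial $\beta(v)\prod_j\partial_x^{\gamma_j}v$ is the total number of derivatives $\sum_j\gamma_j$; in terms of the $v_j$, $v_j$ has weight $j$. *)

(* Defs.v *)
From Stdlib Require Import Reals List ClassicalEpsilon.
Open Scope R_scope.

(** The derivative of a real function, as a total operator (the genuine
    derivative wherever it exists; an arbitrary value otherwise). *)
Definition derivR (f : R -> R) (y : R) : R :=
  epsilon (inhabits 0) (fun l => derivable_pt_lim f y l).

Definition pDt (w : R -> R -> R) (t x : R) : R := derivR (fun s => w s x) t.
Definition pDx (w : R -> R -> R) (t x : R) : R := derivR (fun y => w t y) x.

Definition pDxn (n : nat) (w : R -> R -> R) : R -> R -> R := Nat.iter n pDx w.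

Definition is_open_interval (I : R -> Prop) : Prop :=
  (forall x y z, I x -> I z -> x <= y <= z -> I y) /\
  (forall x, I x -> exists e, 0 < e /\ forall y, Rabs (y - x) < e -> I y).

Definition open2 (U : R -> R -> Prop) : Prop :=
  forall t x, U t x -> exists e, 0 < e /\
    forall s y, Rabs (s - t) < e -> Rabs (y - x) < e -> U s y.

Definition smooth_on (I : R -> Prop) (f : R -> R) : Prop :=
  exists S : (R -> R) -> Prop, S f /\
    forall g, S g ->
      (exists g', S g' /\ forall y, I y -> derivable_pt_lim g y (g' y)) /\
      (forall y, I y -> continuity_pt g y).

Definition continuous2_at (g : R -> R -> R) (t x : R) : Prop :=
  forall eps, 0 < eps -> exists d, 0 < d /\
    forall s y, Rabs (s - t) < d -> Rabs (y - x) < d ->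
      Rabs (g s y - g t x) < eps.

(** w is C^infinity on the open set U of R^2: it belongs to a family of
    functions, all jointly continuous on U, closed under both partial
    derivatives (which exist everywhere on U). *)
Definition smooth2_on (U : R -> R -> Prop) (w : R -> R -> R) : Prop :=
  exists S : (R -> R -> R) -> Prop, S w /\
    forall g, S g ->
      (exists gt, S gt /\ forall t x, U t x ->
          derivable_pt_lim (fun s => g s x) t (gt t x)) /\
      (exists gx, S gx /\ forall t x, U t x ->
          derivable_pt_lim (fun y => g t y) x (gx t x)) /\
      (forall t x, U t x -> continuous2_at g t x).

Definition Lop (alpha : R -> R) (v w : R -> R -> R) : R -> R -> R :=
  fun t x => alpha (v t x) * pDx w t x.

Definition vk (alpha : R -> R) (v : R -> R -> R) (k : nat) : R -> R -> R :=
  Nat.iter k (Lop alpha v) v.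

Definition Pop (alpha a : R -> R) (v w : R -> R -> R) (t x : R) : R :=
  pDt w t x + a (v t x) * pDx w t x
  + pDx (Lop alpha v (Lop alpha v w)) t x.

(** A monomial term  beta(v) * prod_j d_x^{gamma_j} v, encoded as
    (beta, [gamma_1; ...; gamma_N]). *)
Definition prod_derivs (gs : list nat) (v : R -> R -> R) (t x : R) : R :=
  fold_right (fun g acc => pDxn g v t x * acc) 1 gs.

Definition eval_terms (terms : list ((R -> R) * list nat))
    (v : R -> R -> R) (t x : R) : R :=
  fold_right (fun bg acc => fst bg (v t x) * prod_derivs (snd bg) v t x + acc)
    0 terms.

Definition weight (gs : list nat) : nat := fold_right Nat.add 0%nat gs.

(* Main.v *)
Require Import Defs.
From Stdlib Require Import Reals List ClassicalEpsilon.
From Stdlib Require Import Lra Lia.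
From Coquelicot Require Coquelicot.
Open Scope R_scope.


Lemma derivR_eq f y l : derivable_pt_lim f y l -> derivR f y = l.
Proof.
  intro H. unfold derivR.
  pose proof (epsilon_spec (inhabits 0) (fun l => derivable_pt_lim f y l) (ex_intro _ l H)) as H2.
  eapply uniqueness_limite; eauto.
Qed.

Lemma dpl_loc f g x l d : 0 < d -> (forall y, Rabs (y - x) < d -> f y = g y) ->
  derivable_pt_lim f x l -> derivable_pt_lim g x l.
Proof.
  intros Hd Hfg H eps Heps.
  destruct (H eps Heps) as [del Hdel].
  assert (Hm : 0 < Rmin del d) by (apply Rmin_pos; [apply (cond_pos del)|lra]).
  exists (mkposreal _ Hm). intros h Hh0 Hh. simpl in Hh.
  rewrite <- !Hfg.
  - apply Hdel; auto. apply Rlt_le_trans with (1 := Hh). apply Rmin_l.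
  - replace (x - x) with 0 by ring. rewrite Rabs_R0; lra.
  - replace (x + h - x) with h by ring. apply Rlt_le_trans with (1 := Hh). apply Rmin_r.
Qed.

Lemma D_ext f g x l l' : (forall y, f y = g y) -> l = l' -> derivable_pt_lim f x l -> derivable_pt_lim g x l'.
Proof. intros H E; subst l'; apply (dpl_loc f g x l 1); [lra| intros; auto]. Qed.

Lemma D_mult f g x l1 l2 : derivable_pt_lim f x l1 -> derivable_pt_lim g x l2 ->
  derivable_pt_lim (fun y => f y * g y) x (l1 * g x + f x * l2).
Proof. intros; apply (derivable_pt_lim_mult f g x l1 l2); auto. Qed.

Lemma D_plus f g x l1 l2 : derivable_pt_lim f x l1 -> derivable_pt_lim g x l2 ->
  derivable_pt_lim (fun y => f y + g y) x (l1 + l2).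
Proof. intros; apply (derivable_pt_lim_plus f g x l1 l2); auto. Qed.

Lemma D_const c x : derivable_pt_lim (fun _ => c) x 0.
Proof. apply (derivable_pt_lim_const c x). Qed.

Lemma D_id x : derivable_pt_lim (fun y => y) x 1.
Proof. apply (derivable_pt_lim_id x). Qed.

Lemma D_comp f g x l1 l2 : derivable_pt_lim f x l1 -> derivable_pt_lim g (f x) l2 ->
  derivable_pt_lim (fun y => g (f y)) x (l2 * l1).
Proof. intros; apply (derivable_pt_lim_comp f g x l1 l2); auto. Qed.

Lemma D_inv f x l : derivable_pt_lim f x l -> f x <> 0 ->
  derivable_pt_lim (fun y => / f y) x (- l / (f x)^2).
Proof.
  intros H Hn.
  pose proof (derivable_pt_lim_div (fun _ => 1) f x 0 l (D_const 1 x) H Hn) as H2.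
  eapply D_ext; [ | | exact H2]; simpl.
  - intros; unfold div_fct; unfold Rdiv; ring.
  - unfold Rsqr; field; auto.
Qed.


Definition prodv {A} (ev : A -> R) (fs : list A) : R := fold_right (fun f a => ev f * a) 1 fs.
Definition sp {A} (ev : A -> R) (l : list (list A)) : R :=
  fold_right (fun fs acc => prodv ev fs + acc) 0 l.

Lemma prodv_app {A} (ev : A -> R) f1 f2 : prodv ev (f1 ++ f2) = prodv ev f1 * prodv ev f2.
Proof. induction f1; simpl; [ring| rewrite IHf1; ring]. Qed.
Lemma sp_app {A} (ev : A -> R) l1 l2 : sp ev (l1 ++ l2) = sp ev l1 + sp ev l2.
Proof. induction l1; simpl; [ring| rewrite IHl1; ring]. Qed.
Lemma sp_map_cons {A} (ev : A -> R) f L : sp ev (map (cons f) L) = ev f * sp ev L.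
Proof. induction L; simpl; [ring| rewrite IHL; unfold prodv; simpl; ring]. Qed.
Lemma sp_map_appr {A} (ev : A -> R) fs L : sp ev (map (fun m => m ++ fs) L) = sp ev L * prodv ev fs.
Proof. induction L; simpl; [ring| rewrite IHL, prodv_app; ring]. Qed.
Lemma prodv_ext {A} (ev1 ev2 : A -> R) fs : (forall a, ev1 a = ev2 a) -> prodv ev1 fs = prodv ev2 fs.
Proof. intro H; induction fs; simpl; auto; rewrite IHfs, H; auto. Qed.
Lemma sp_ext {A} (ev1 ev2 : A -> R) l : (forall a, ev1 a = ev2 a) -> sp ev1 l = sp ev2 l.
Proof. intro H; induction l; simpl; auto; rewrite IHl, (prodv_ext ev1 ev2); auto. Qed.

Definition allP {A} (P : A -> Prop) (l : list (list A)) := forall fs, In fs l -> forall a, In a fs -> P a.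

Lemma allP_app {A} (P : A -> Prop) l1 l2 : allP P l1 -> allP P l2 -> allP P (l1 ++ l2).
Proof. intros H1 H2 fs Hfs; apply in_app_or in Hfs; destruct Hfs; eauto. Qed.

Section Gen.
Variables (Pt A : Type) (ev : Pt -> A -> R) (line : Pt -> R -> Pt) (coord : Pt -> R)
  (Q : Pt -> Prop) (P : A -> Prop).
Hypothesis Hline : forall p a, ev (line p (coord p)) a = ev p a.
Hypothesis HD : forall a, P a -> exists L, allP P L /\
  forall p, Q p -> derivable_pt_lim (fun y => ev (line p y) a) (coord p) (sp (ev p) L).

Lemma gen_prod : forall fs, (forall a, In a fs -> P a) -> exists L, allP P L /\
  forall p, Q p -> derivable_pt_lim (fun y => prodv (ev (line p y)) fs) (coord p) (sp (ev p) L).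
Proof.
  induction fs as [|a fs IH]; intros Hfs.
  - exists nil; split; [intros fs [] | intros p _; simpl; apply D_const].
  - destruct (HD a (Hfs a (or_introl eq_refl))) as [La [HLa Da]].
    destruct IH as [Lf [HLf Df]]; [intros; apply Hfs; right; auto|].
    exists (map (fun m => m ++ fs) La ++ map (cons a) Lf). split.
    + apply allP_app.
      * intros m Hm b Hb. apply in_map_iff in Hm. destruct Hm as [m0 [<- Hm0]].
        apply in_app_or in Hb; destruct Hb; [eapply HLa; eauto| apply Hfs; right; auto].
      * intros m Hm b Hb. apply in_map_iff in Hm. destruct Hm as [m0 [<- Hm0]].
        destruct Hb as [<-|Hb]; [apply Hfs; left; auto| eapply HLf; eauto].
    + intros p Qp. simpl. eapply D_ext; [intros; reflexivity| | apply D_mult; [apply Da| apply Df]; auto].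
      rewrite sp_app, sp_map_appr, sp_map_cons, Hline.
      rewrite (prodv_ext (ev (line p (coord p))) (ev p)) by auto. ring.
Qed.

Lemma gen_sp : forall l, allP P l -> exists l', allP P l' /\
  forall p, Q p -> derivable_pt_lim (fun y => sp (ev (line p y)) l) (coord p) (sp (ev p) l').
Proof.
  induction l as [|fs l IH]; intros Hl.
  - exists nil; split; [intros fs [] | intros p _; simpl; apply D_const].
  - destruct (gen_prod fs) as [L1 [H1 D1]]; [intros; eapply Hl; [left|]; eauto|].
    destruct IH as [L2 [H2 D2]]; [intros f Hf; apply Hl; right; auto|].
    exists (L1 ++ L2); split; [apply allP_app; auto|].
    intros p Qp; simpl. eapply D_ext; [intros; reflexivity| rewrite sp_app; reflexivity|].
    apply D_plus; auto.
Qed.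
End Gen.

Section OneD.
Variable I : R -> Prop.
Hypothesis HI : forall x, I x -> exists e, 0 < e /\ forall y, Rabs (y - x) < e -> I y.

Definition SmI (f : R -> R) := exists S : (R -> R) -> Prop, S f /\
  forall g, S g -> exists g', S g' /\ forall y, I y -> derivable_pt_lim g y (g' y).

Lemma SmI_der f y : SmI f -> I y -> derivable_pt_lim f y (derivR f y).
Proof.
  intros [S [Sf HS]] Iy. destruct (HS f Sf) as [g' [_ Hg]].
  rewrite (derivR_eq _ _ _ (Hg y Iy)); auto.
Qed.

Lemma dpl_locI f g y l : I y -> (forall z, I z -> f z = g z) -> derivable_pt_lim f y l -> derivable_pt_lim g y l.
Proof.
  intros Iy H D. destruct (HI y Iy) as [e [He Hb]].
  apply (dpl_loc f g y l e); auto.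
Qed.

Lemma SmI_ext f g : SmI f -> (forall y, I y -> f y = g y) -> SmI g.
Proof.
  intros [S [Sf HS]] Hfg.
  exists (fun h => exists f, S f /\ forall y, I y -> f y = h y). split; [eauto|].
  intros h [f0 [Sf0 Hf0]]. destruct (HS f0 Sf0) as [g' [Sg' Hg']].
  exists g'; split.
  - exists g'; split; auto.
  - intros y Iy. eapply dpl_locI; eauto.
Qed.

Lemma SmI_derivR f : SmI f -> SmI (derivR f).
Proof.
  intros Hf. destruct Hf as [S [Sf HS]] eqn:E. destruct (HS f Sf) as [g' [Sg' Hg']].
  apply SmI_ext with g'.
  - exists S; auto.
  - intros y Iy. symmetry; apply derivR_eq; auto.
Qed.

Lemma SmI_cont f y : SmI f -> I y -> continuity_pt f y.
Proof. intros Hf Iy. apply derivable_continuous_pt. exists (derivR f y). apply SmI_der; auto. Qed.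

Lemma SmI_const c : SmI (fun _ => c).
Proof.
  exists (fun h => exists c, h = fun _ => c). split; [eauto|].
  intros g [c0 ->]. exists (fun _ => 0). split; [eauto|]. intros; apply D_const.
Qed.

Lemma SmI_id : SmI (fun y => y).
Proof.
  exists (fun h => h = (fun y => y) \/ exists c, h = fun _ => c). split; [auto|].
  intros g [-> | [c0 ->]].
  - exists (fun _ => 1). split; [eauto|]. intros; apply D_id.
  - exists (fun _ => 0). split; [eauto|]. intros; apply D_const.
Qed.

Section WithAlpha.
Variable alpha : R -> R.
Hypothesis Halpha : SmI alpha.
Hypothesis Hnz : forall y, I y -> alpha y <> 0.

Definition PB f := SmI f \/ (forall y, I y -> f y = / alpha y).

Lemma PB_D : forall a, PB a -> exists L, allP PB L /\
  forall p, I p -> derivable_pt_lim (fun y => a y) p (sp (fun g => g p) L).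
Proof.
  intros f [Hf | Hf].
  - exists ((derivR f :: nil) :: nil). split.
    + intros fs [<-|[]] b [<-|[]]. left; apply SmI_derivR; auto.
    + intros p Ip. eapply D_ext; [intros; reflexivity| | apply SmI_der; auto].
      unfold sp, prodv; simpl; ring.
  - exists (((fun _ => -1) :: derivR alpha :: f :: f :: nil) :: nil). split.
    + intros fs [<-|[]] b Hb. simpl in Hb.
      destruct Hb as [<-|[<-|[<-|[<-|[]]]]]; try (right; auto; fail); left.
      * apply SmI_const.
      * apply SmI_derivR; auto.
    + intros p Ip. apply dpl_locI with (fun y => / alpha y); [auto| intros; symmetry; auto|].
      eapply D_ext; [intros; reflexivity| |apply D_inv; [apply SmI_der; auto| auto]].
      unfold sp, prodv; simpl. rewrite Hf; auto. field. auto.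
Qed.

Lemma SmI_sp l : allP PB l -> SmI (fun y => sp (fun g => g y) l).
Proof.
  intros Hl.
  exists (fun h => exists l, allP PB l /\ forall y, I y -> h y = sp (fun g => g y) l).
  split; [eauto|].
  intros h [l0 [Hl0 Eh]].
  destruct (gen_sp R (R -> R) (fun p g => g p) (fun _ y => y) (fun p => p) I PB
             (fun _ _ => eq_refl) PB_D l0 Hl0) as [l' [Hl' Dl']].
  exists (fun y => sp (fun g => g y) l'). split; [eauto|].
  intros y Iy. eapply dpl_locI; [eauto| intros; symmetry; apply Eh; auto| apply Dl'; auto].
Qed.

Lemma SmI_inv : SmI (fun y => / alpha y).
Proof.
  apply SmI_ext with (fun y => sp (fun g => g y) (((fun z => / alpha z) :: nil) :: nil)).
  - apply SmI_sp. intros fs [<-|[]] b [<-|[]]. right; auto.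
  - intros; unfold sp, prodv; simpl; ring.
Qed.
End WithAlpha.

Lemma SmI_mult f g : SmI f -> SmI g -> SmI (fun y => f y * g y).
Proof.
  intros Hf Hg.
  apply SmI_ext with (fun y => sp (fun h => h y) ((f :: g :: nil) :: nil)).
  - apply (SmI_sp (fun _ => 1)); [apply SmI_const| intros; lra|]. intros fs [<-|[]] b [<-|[<-|[]]]; left; auto.
  - intros; unfold sp, prodv; simpl; ring.
Qed.

Lemma SmI_plus f g : SmI f -> SmI g -> SmI (fun y => f y + g y).
Proof.
  intros Hf Hg.
  apply SmI_ext with (fun y => sp (fun h => h y) ((f :: nil) :: (g :: nil) :: nil)).
  - apply (SmI_sp (fun _ => 1)); [apply SmI_const| intros; lra|]. intros fs [<-|[<-|[]]] b [<-|[]]; left; auto.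
  - intros; unfold sp, prodv; simpl; ring.
Qed.

Lemma SmI_scal c f : SmI f -> SmI (fun y => c * f y).
Proof. intros; apply (SmI_mult (fun _ => c)); auto; apply SmI_const. Qed.

Lemma SmI_opp f : SmI f -> SmI (fun y => - f y).
Proof. intros; apply SmI_ext with (fun y => -1 * f y); [apply SmI_scal; auto| intros; ring]. Qed.

End OneD.

Lemma cont_to2 g t x : continuous2_at g t x -> Continuity.continuity_2d_pt g t x.
Proof.
  intros H eps. destruct (H eps (cond_pos eps)) as [d [Hd Hd2]].
  exists (mkposreal d Hd). simpl. intros; apply Hd2; auto.
Qed.

Lemma cont_of2 g t x : Continuity.continuity_2d_pt g t x -> continuous2_at g t x.
Proof.
  intros H eps Heps. destruct (H (mkposreal eps Heps)) as [d Hd].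
  exists d; split; [apply cond_pos|]. intros; apply Hd; auto.
Qed.

Lemma Derive_eq f x l : derivable_pt_lim f x l -> Derive.Derive f x = l.
Proof. intro H. apply Derive.is_derive_unique. apply Derive.is_derive_Reals. exact H. Qed.

Section TwoD.
Variables (I : R -> Prop) (U : R -> R -> Prop) (v : R -> R -> R).
Hypothesis HI : forall x, I x -> exists e, 0 < e /\ forall y, Rabs (y - x) < e -> I y.
Hypothesis HU : open2 U.
Hypothesis Hv : smooth2_on U v.
Hypothesis HvI : forall t x, U t x -> I (v t x).

Lemma Sm2_dx w t x : smooth2_on U w -> U t x -> derivable_pt_lim (fun y => w t y) x (pDx w t x).
Proof.
  intros [S [Sw HS]] Ut. destruct (HS w Sw) as [_ [[gx [_ Hgx]] _]].
  unfold pDx. rewrite (derivR_eq _ _ _ (Hgx t x Ut)); auto.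
Qed.

Lemma Sm2_dt w t x : smooth2_on U w -> U t x -> derivable_pt_lim (fun s => w s x) t (pDt w t x).
Proof.
  intros [S [Sw HS]] Ut. destruct (HS w Sw) as [[gt [_ Hgt]] _].
  unfold pDt. rewrite (derivR_eq _ _ _ (Hgt t x Ut)); auto.
Qed.

Lemma Sm2_cont w t x : smooth2_on U w -> U t x -> Continuity.continuity_2d_pt w t x.
Proof.
  intros [S [Sw HS]] Ut. destruct (HS w Sw) as [_ [_ Hc]]. apply cont_to2; auto.
Qed.

Lemma loc_x f g t x l : U t x -> (forall s y, U s y -> f s y = g s y) ->
  derivable_pt_lim (fun y => f t y) x l -> derivable_pt_lim (fun y => g t y) x l.
Proof.
  intros Ut H D. destruct (HU t x Ut) as [e [He Hb]].
  apply (dpl_loc (fun y => f t y) (fun y => g t y) x l e He); auto. intros y Hy; apply H, Hb; auto.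
  replace (t - t) with 0 by ring; rewrite Rabs_R0; lra.
Qed.

Lemma loc_t f g t x l : U t x -> (forall s y, U s y -> f s y = g s y) ->
  derivable_pt_lim (fun s => f s x) t l -> derivable_pt_lim (fun s => g s x) t l.
Proof.
  intros Ut H D. destruct (HU t x Ut) as [e [He Hb]].
  apply (dpl_loc (fun s => f s x) (fun s => g s x) t l e He); auto. intros y Hy; apply H, Hb; auto.
  replace (x - x) with 0 by ring; rewrite Rabs_R0; lra.
Qed.

Lemma loc_c f g t x : U t x -> (forall s y, U s y -> f s y = g s y) ->
  Continuity.continuity_2d_pt f t x -> Continuity.continuity_2d_pt g t x.
Proof.
  intros Ut H C. destruct (HU t x Ut) as [e [He Hb]].
  apply Continuity.continuity_2d_pt_ext_loc with f; auto.
  exists (mkposreal e He); simpl; intros; apply H, Hb; auto.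
Qed.

Lemma Sm2_ext w w' : smooth2_on U w -> (forall t x, U t x -> w t x = w' t x) -> smooth2_on U w'.
Proof.
  intros [S [Sw HS]] E.
  exists (fun h => exists g, S g /\ forall t x, U t x -> g t x = h t x). split; [eauto|].
  intros h [g [Sg Eg]]. destruct (HS g Sg) as [[gt [Sgt Hgt]] [[gx [Sgx Hgx]] Hc]].
  split; [|split].
  - exists gt; split; [exists gt; split; auto|]. intros t x Ut; eapply loc_t; eauto.
  - exists gx; split; [exists gx; split; auto|]. intros t x Ut; eapply loc_x; eauto.
  - intros t x Ut. apply cont_of2. eapply loc_c; eauto. apply cont_to2; auto.
Qed.

Lemma Sm2_pDx w : smooth2_on U w -> smooth2_on U (pDx w).
Proof.
  intros Hw. destruct Hw as [S [Sw HS]] eqn:E. destruct (HS w Sw) as [_ [[gx [Sgx Hgx]] _]].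
  apply Sm2_ext with gx; [exists S; auto|].
  intros t x Ut. unfold pDx. symmetry; apply derivR_eq; auto.
Qed.

Lemma Sm2_pDt w : smooth2_on U w -> smooth2_on U (pDt w).
Proof.
  intros Hw. destruct Hw as [S [Sw HS]] eqn:E. destruct (HS w Sw) as [[gt [Sgt Hgt]] _].
  apply Sm2_ext with gt; [exists S; auto|].
  intros t x Ut. unfold pDt. symmetry; apply derivR_eq; auto.
Qed.

Definition P2 (w : R -> R -> R) := smooth2_on U w \/
  exists b, SmI I b /\ forall t x, U t x -> w t x = b (v t x).

Lemma P2_Dx : forall a, P2 a -> exists L, allP P2 L /\
  forall p, U (fst p) (snd p) -> derivable_pt_lim (fun y => a (fst p) y) (snd p)
     (sp (fun w => w (fst p) (snd p)) L).
Proof.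
  intros a [Ha | [b [Hb Eb]]].
  - exists ((pDx a :: nil) :: nil). split.
    + intros fs [<-|[]] c [<-|[]]. left; apply Sm2_pDx; auto.
    + intros [t x] Ut; simpl in *. eapply D_ext; [intros; reflexivity| | apply Sm2_dx; auto].
      unfold sp, prodv; simpl; ring.
  - exists (((fun t x => derivR b (v t x)) :: pDx v :: nil) :: nil). split.
    + intros fs [<-|[]] c [<-|[<-|[]]].
      * right. exists (derivR b); split; auto. apply (SmI_derivR I HI); auto.
      * left; apply Sm2_pDx; auto.
    + intros [t x] Ut; simpl in *.
      apply loc_x with (fun s y => b (v s y)); auto; [intros; symmetry; auto|].
      eapply D_ext; [intros; reflexivity| | apply D_comp; [apply Sm2_dx; auto| apply (SmI_der I); auto]].
      unfold sp, prodv; simpl; ring.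
Qed.

Lemma P2_Dt : forall a, P2 a -> exists L, allP P2 L /\
  forall p, U (fst p) (snd p) -> derivable_pt_lim (fun s => a s (snd p)) (fst p)
     (sp (fun w => w (fst p) (snd p)) L).
Proof.
  intros a [Ha | [b [Hb Eb]]].
  - exists ((pDt a :: nil) :: nil). split.
    + intros fs [<-|[]] c [<-|[]]. left; apply Sm2_pDt; auto.
    + intros [t x] Ut; simpl in *. eapply D_ext; [intros; reflexivity| | apply Sm2_dt; auto].
      unfold sp, prodv; simpl; ring.
  - exists (((fun t x => derivR b (v t x)) :: pDt v :: nil) :: nil). split.
    + intros fs [<-|[]] c [<-|[<-|[]]].
      * right. exists (derivR b); split; auto. apply (SmI_derivR I HI); auto.
      * left; apply Sm2_pDt; auto.
    + intros [t x] Ut; simpl in *.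
      apply loc_t with (fun s y => b (v s y)); auto; [intros; symmetry; auto|].
      eapply D_ext; [intros; reflexivity| | apply D_comp; [apply Sm2_dt; auto| apply (SmI_der I); auto]].
      unfold sp, prodv; simpl; ring.
Qed.

Lemma P2_cont a t x : P2 a -> U t x -> Continuity.continuity_2d_pt a t x.
Proof.
  intros [Ha | [b [Hb Eb]]] Ut; [apply Sm2_cont; auto|].
  apply loc_c with (fun s y => b (v s y)); auto; [intros; symmetry; auto|].
  apply Continuity.continuity_1d_2d_pt_comp; [apply (SmI_cont I); auto| apply Sm2_cont; auto].
Qed.

Lemma sp_cont l t x : allP P2 l -> U t x ->
  Continuity.continuity_2d_pt (fun s y => sp (fun w => w s y) l) t x.
Proof.
  intros Hl Ut. induction l as [|fs l IH]; simpl.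
  - apply Continuity.continuity_2d_pt_const.
  - apply Continuity.continuity_2d_pt_plus; [| apply IH; intros f Hf; apply Hl; right; auto].
    assert (Hfs : forall a, In a fs -> P2 a) by (intros; eapply Hl; [left|]; eauto).
    clear IH Hl. induction fs as [|a fs IHf]; simpl.
    + apply Continuity.continuity_2d_pt_const.
    + apply Continuity.continuity_2d_pt_mult; [apply P2_cont; auto; apply Hfs; left; auto|].
      apply IHf; intros; apply Hfs; right; auto.
Qed.

Lemma Sm2_sp l : allP P2 l -> smooth2_on U (fun t x => sp (fun w => w t x) l).
Proof.
  intros Hl.
  exists (fun h => exists l, allP P2 l /\ forall t x, U t x -> h t x = sp (fun w => w t x) l).
  split; [eauto|].
  intros h [l0 [Hl0 Eh]]. split; [|split].
  - destruct (gen_sp (R*R) (R->R->R) (fun p w => w (fst p) (snd p)) (fun p s => (s, snd p)) fst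
      (fun p => U (fst p) (snd p)) P2 (fun p a => eq_refl) P2_Dt l0 Hl0) as [l' [Hl' D']].
    exists (fun t x => sp (fun w => w t x) l'). split; [eauto|].
    intros t x Ut. apply loc_t with (fun s y => sp (fun w => w s y) l0); auto.
    + intros; symmetry; auto.
    + apply (D' (t, x)); auto.
  - destruct (gen_sp (R*R) (R->R->R) (fun p w => w (fst p) (snd p)) (fun p s => (fst p, s)) snd
      (fun p => U (fst p) (snd p)) P2 (fun p a => eq_refl) P2_Dx l0 Hl0) as [l' [Hl' D']].
    exists (fun t x => sp (fun w => w t x) l'). split; [eauto|].
    intros t x Ut. apply loc_x with (fun s y => sp (fun w => w s y) l0); auto.
    + intros; symmetry; auto.
    + apply (D' (t, x)); auto.
  - intros t x Ut. apply cont_of2. apply loc_c with (fun s y => sp (fun w => w s y) l0); auto.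
    + intros; symmetry; auto.
    + apply sp_cont; auto.
Qed.

Lemma Sm2_mult w1 w2 : smooth2_on U w1 -> smooth2_on U w2 ->
  smooth2_on U (fun t x => w1 t x * w2 t x).
Proof.
  intros H1 H2. apply Sm2_ext with (fun t x => sp (fun w => w t x) ((w1 :: w2 :: nil) :: nil)).
  - apply Sm2_sp. intros fs [<-|[]] c [<-|[<-|[]]]; left; auto.
  - intros; unfold sp, prodv; simpl; ring.
Qed.

Lemma Sm2_comp b : SmI I b -> smooth2_on U (fun t x => b (v t x)).
Proof.
  intros Hb. apply Sm2_ext with (fun t x => sp (fun w => w t x) (((fun t x => b (v t x)) :: nil) :: nil)).
  - apply Sm2_sp. intros fs [<-|[]] c [<-|[]]; right; eauto.
  - intros; unfold sp, prodv; simpl; ring.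
Qed.

Lemma Sm2_Lop alpha w : SmI I alpha -> smooth2_on U w -> smooth2_on U (Lop alpha v w).
Proof.
  intros Ha Hw. unfold Lop. apply Sm2_mult; [apply Sm2_comp; auto| apply Sm2_pDx; auto].
Qed.

Lemma Sm2_pDxn n : smooth2_on U (pDxn n v).
Proof. induction n; simpl; auto. apply Sm2_pDx; auto. Qed.

Lemma Sm2_vk alpha k : SmI I alpha -> smooth2_on U (vk alpha v k).
Proof. intros Ha; induction k; simpl; auto. apply Sm2_Lop; auto. Qed.

End TwoD.

Lemma ex_der_of f x l : derivable_pt_lim f x l -> @Derive.ex_derive Hierarchy.R_AbsRing Hierarchy.R_NormedModule f x.
Proof. intro H. exists l. apply Derive.is_derive_Reals. exact H. Qed.

Lemma schwarz_U (U : R -> R -> Prop) w t0 x0 : open2 U -> smooth2_on U w -> U t0 x0 ->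
  pDt (pDx w) t0 x0 = pDx (pDt w) t0 x0.
Proof.
  intros HU Hw Ut. destruct (HU t0 x0 Ut) as [e [He Hb]].
  assert (He2 : 0 < e / 2) by lra.
  assert (Hwx := Sm2_pDx U HU w Hw). assert (Hwt := Sm2_pDt U HU w Hw).
  assert (Hwxt := Sm2_pDt U HU _ Hwx). assert (Hwtx := Sm2_pDx U HU _ Hwt).
  assert (In1 : forall u v z, Rabs (u - t0) < e/2 -> Rabs (v - x0) < e/2 -> Rabs (z - u) < e/2 -> U z v).
  { intros u v z H1 H2 H3. apply Hb.
    - replace (z - t0) with ((z - u) + (u - t0)) by ring.
      eapply Rle_lt_trans; [apply Rabs_triang| lra].
    - lra. }
  assert (In2 : forall u v z, Rabs (u - t0) < e/2 -> Rabs (v - x0) < e/2 -> Rabs (z - v) < e/2 -> U u z).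
  { intros u v z H1 H2 H3. apply Hb.
    - lra.
    - replace (z - x0) with ((z - v) + (v - x0)) by ring.
      eapply Rle_lt_trans; [apply Rabs_triang| lra]. }
  assert (Z0 : forall a : R, Rabs (a - a) < e/2) by (intros; replace (a - a) with 0 by ring; rewrite Rabs_R0; lra).
  assert (K1 : forall u v, Rabs (u - t0) < e/2 -> Rabs (v - x0) < e/2 ->
     derivable_pt_lim (fun z => Derive.Derive (fun t => w z t) v) u (pDt (pDx w) u v)).
  { intros u v H1 H2. apply (dpl_loc (fun z => pDx w z v) _ u _ (e/2)); auto.
    - intros z Hz. symmetry. apply Derive_eq. apply (Sm2_dx U); auto. eapply In1; eauto.
    - apply (Sm2_dt U); auto. eapply In1; eauto. }
  assert (K2 : forall u v, Rabs (u - t0) < e/2 -> Rabs (v - x0) < e/2 ->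
     derivable_pt_lim (fun z => Derive.Derive (fun t => w t z) u) v (pDx (pDt w) u v)).
  { intros u v H1 H2. apply (dpl_loc (fun z => pDt w u z) _ v _ (e/2)); auto.
    - intros z Hz. symmetry. apply Derive_eq. apply (Sm2_dt U); auto. eapply In2; eauto.
    - apply (Sm2_dx U); auto. eapply In2; eauto. }
  assert (HS := Derive_2d.Schwarz w t0 x0).
  rewrite (Derive_eq _ _ _ (K1 t0 x0 (Z0 _) (Z0 _))) in HS.
  rewrite (Derive_eq _ _ _ (K2 t0 x0 (Z0 _) (Z0 _))) in HS.
  apply HS.
  - exists (mkposreal _ He2). simpl. intros u v H1 H2. split; [|split; [|split]].
    + eapply ex_der_of. apply (Sm2_dt U); auto. eapply In1; eauto.
    + eapply ex_der_of. apply (Sm2_dx U); auto. eapply In1; eauto.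
    + eapply ex_der_of. apply K1; auto.
    + eapply ex_der_of. apply K2; auto.
  - apply Continuity.continuity_2d_pt_ext_loc with (pDt (pDx w)).
    + exists (mkposreal _ He2). simpl. intros u v H1 H2. symmetry. apply Derive_eq. apply K1; auto.
    + apply (Sm2_cont U); auto.
  - apply Continuity.continuity_2d_pt_ext_loc with (pDx (pDt w)).
    + exists (mkposreal _ He2). simpl. intros u v H1 H2. symmetry. apply Derive_eq. apply K2; auto.
    + apply (Sm2_cont U); auto.
Qed.

Definition Term := ((R -> R) * list nat)%type.

Fixpoint dprod (gs : list nat) : list (list nat) :=
  match gs with
  | nil => nil
  | g :: gs' => (S g :: gs') :: map (cons g) (dprod gs')
  end.

Definition Dterm (bg : Term) : list Term :=
  (derivR (fst bg), 1%nat :: snd bg) :: map (fun gs => (fst bg, gs)) (dprod (snd bg)).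
Definition Dsym (l : list Term) : list Term := flat_map Dterm l.
Definition mulT (l1 l2 : list Term) : list Term :=
  flat_map (fun a => map (fun b => ((fun y => fst a y * fst b y), snd a ++ snd b)) l2) l1.
Definition scaleT (b : R -> R) (l : list Term) : list Term :=
  map (fun c => ((fun y => b y * fst c y), snd c)) l.
Definition Lsym (alpha : R -> R) (l : list Term) : list Term := scaleT alpha (Dsym l).
Fixpoint vsym (alpha : R -> R) (n : nat) : list Term :=
  match n with
  | O => (alpha, 1%nat :: nil) :: nil
  | S n' => Lsym alpha (vsym alpha n')
  end.

Lemma ET_app l1 l2 v t x : eval_terms (l1 ++ l2) v t x = eval_terms l1 v t x + eval_terms l2 v t x.
Proof. induction l1; simpl; [ring| rewrite IHl1; ring]. Qed.

Lemma PD_app g1 g2 v t x : prod_derivs (g1 ++ g2) v t x = prod_derivs g1 v t x * prod_derivs g2 v t x.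
Proof. induction g1; simpl; [ring| rewrite IHg1; ring]. Qed.

Lemma ET_mulT l1 l2 v t x : eval_terms (mulT l1 l2) v t x = eval_terms l1 v t x * eval_terms l2 v t x.
Proof.
  induction l1 as [|a l1 IH]; simpl; [ring|].
  unfold mulT in *; simpl. rewrite ET_app, IH.
  assert (H : eval_terms (map (fun b => ((fun y => fst a y * fst b y), snd a ++ snd b)) l2) v t x
     = fst a (v t x) * prod_derivs (snd a) v t x * eval_terms l2 v t x).
  { clear IH. induction l2; simpl; [ring| rewrite IHl2, PD_app; ring]. }
  rewrite H; ring.
Qed.

Lemma ET_scaleT b l v t x : eval_terms (scaleT b l) v t x = b (v t x) * eval_terms l v t x.
Proof. induction l; simpl; [ring| rewrite IHl; ring]. Qed.

Definition sumP (L : list (list nat)) v t x := fold_right (fun gs acc => prod_derivs gs v t x + acc) 0 L.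

Lemma sumP_cons g L v t x : sumP (map (cons g) L) v t x = pDxn g v t x * sumP L v t x.
Proof. induction L; simpl; [ring| rewrite IHL; ring]. Qed.

Lemma ET_mapb b L v t x : eval_terms (map (fun gs => (b, gs)) L) v t x = b (v t x) * sumP L v t x.
Proof. induction L; simpl; [ring| rewrite IHL; ring]. Qed.

Lemma ET_Dsym_cons bg l v t x : eval_terms (Dsym (bg :: l)) v t x =
  eval_terms (Dterm bg) v t x + eval_terms (Dsym l) v t x.
Proof. unfold Dsym; cbn [flat_map]; apply ET_app. Qed.

Lemma weight_app a b : weight (a ++ b) = (weight a + weight b)%nat.
Proof. induction a; simpl; auto. rewrite IHa; lia. Qed.

Lemma In_dprod gs gs' : In gs' (dprod gs) -> weight gs' = S (weight gs) /\
  forall g, In g gs' -> exists g0, In g0 gs /\ (g = g0 \/ g = S g0).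
Proof.
  revert gs'; induction gs as [|g gs IH]; simpl; intros gs' H; [destruct H|].
  destruct H as [<- | H].
  - split; [simpl; lia|]. intros g1 [<-|Hg1]; [exists g; auto| exists g1; auto].
  - apply in_map_iff in H. destruct H as [m [<- Hm]]. destruct (IH m Hm) as [Hw Hg].
    split; [simpl; lia|]. intros g1 [<-|Hg1]; [exists g; simpl; auto|].
    destruct (Hg g1 Hg1) as [g0 [? ?]]; exists g0; auto.
Qed.

Lemma In_Dsym l bg' : In bg' (Dsym l) -> exists bg, In bg l /\ weight (snd bg') = S (weight (snd bg))
  /\ (forall g, In g (snd bg') -> g = 1%nat \/ exists g0, In g0 (snd bg) /\ (g = g0 \/ g = S g0))
  /\ (fst bg' = derivR (fst bg) \/ fst bg' = fst bg).
Proof.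
  unfold Dsym. intros H. apply in_flat_map in H. destruct H as [bg [Hbg H]].
  exists bg; split; auto. unfold Dterm in H. destruct H as [<- | H].
  - simpl. split; [reflexivity|]. split; [|left; reflexivity]. intros g [<-|Hg]; [left; auto| right; exists g; auto].
  - apply in_map_iff in H. destruct H as [gs [<- Hgs]]. simpl.
    destruct (In_dprod _ _ Hgs) as [Hw Hg]. split; [exact Hw|]. split; [|right; reflexivity].
    intros g Hg1; right; auto.
Qed.

Lemma In_mulT l1 l2 bg : In bg (mulT l1 l2) -> exists b1 b2, In b1 l1 /\ In b2 l2 /\
  snd bg = snd b1 ++ snd b2 /\ fst bg = (fun y => fst b1 y * fst b2 y).
Proof.
  unfold mulT. intros H. apply in_flat_map in H. destruct H as [b1 [H1 H]].
  apply in_map_iff in H. destruct H as [b2 [<- H2]]. exists b1, b2; auto.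
Qed.

Lemma In_scaleT b l bg : In bg (scaleT b l) -> exists c, In c l /\ snd bg = snd c /\
  fst bg = (fun y => b y * fst c y).
Proof.
  unfold scaleT. intros H. apply in_map_iff in H. destruct H as [c [<- Hc]]. exists c; auto.
Qed.

Definition WBw (w m : nat) (l : list Term) :=
  forall bg, In bg l -> weight (snd bg) = w /\ forall g, In g (snd bg) -> (1 <= g <= m)%nat.

Lemma WBw_Lsym al w m l : WBw w m l -> WBw (S w) (S m) (Lsym al l).
Proof.
  intros H bg Hbg. unfold Lsym in Hbg. apply In_scaleT in Hbg. destruct Hbg as [c [Hc [Es _]]].
  rewrite Es. destruct (In_Dsym _ _ Hc) as [b [Hb [Hw [Hg _]]]].
  destruct (H b Hb) as [Hwb Hgb]. split; [lia|].
  intros g Hg1. destruct (Hg g Hg1) as [->|[g0 [Hg0 [->| ->]]]]; [lia| |]; specialize (Hgb g0 Hg0); lia.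
Qed.

Lemma WBw_mulT w1 w2 m1 m2 m l1 l2 : WBw w1 m1 l1 -> WBw w2 m2 l2 -> (m1 <= m)%nat -> (m2 <= m)%nat ->
  WBw (w1 + w2) m (mulT l1 l2).
Proof.
  intros H1 H2 Hm1 Hm2 bg Hbg. destruct (In_mulT _ _ _ Hbg) as [b1 [b2 [Hb1 [Hb2 [Es _]]]]].
  rewrite Es, weight_app. destruct (H1 _ Hb1) as [W1 G1]. destruct (H2 _ Hb2) as [W2 G2].
  split; [lia|]. intros g Hg. apply in_app_or in Hg. destruct Hg as [Hg|Hg];
  [specialize (G1 g Hg)| specialize (G2 g Hg)]; lia.
Qed.

Lemma WBw_scaleT b w m l : WBw w m l -> WBw w m (scaleT b l).
Proof.
  intros H bg Hbg. destruct (In_scaleT _ _ _ Hbg) as [c [Hc [Es _]]]. rewrite Es; auto.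
Qed.

Lemma WBw_vsym al n : WBw (S n) (S n) (vsym al n).
Proof.
  induction n; simpl.
  - intros bg [<-|[]]. simpl. split; auto. intros g [<-|[]]; lia.
  - apply WBw_Lsym; auto.
Qed.

Section Coef.
Variable I : R -> Prop.
Hypothesis HI : forall x, I x -> exists e, 0 < e /\ forall y, Rabs (y - x) < e -> I y.
Definition SmL (l : list Term) := forall bg, In bg l -> SmI I (fst bg).

Lemma SmL_app l1 l2 : SmL l1 -> SmL l2 -> SmL (l1 ++ l2).
Proof. intros H1 H2 bg H. apply in_app_or in H; destruct H; auto. Qed.

Lemma SmL_Dsym l : SmL l -> SmL (Dsym l).
Proof.
  intros H bg Hbg. destruct (In_Dsym _ _ Hbg) as [b [Hb [_ [_ [E|E]]]]]; rewrite E.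
  - apply SmI_derivR; auto.
  - auto.
Qed.

Lemma SmL_mulT l1 l2 : SmL l1 -> SmL l2 -> SmL (mulT l1 l2).
Proof.
  intros H1 H2 bg Hbg. destruct (In_mulT _ _ _ Hbg) as [b1 [b2 [Hb1 [Hb2 [_ E]]]]].
  rewrite E. apply SmI_mult; auto.
Qed.

Lemma SmL_scaleT b l : SmI I b -> SmL l -> SmL (scaleT b l).
Proof.
  intros Hb H bg Hbg. destruct (In_scaleT _ _ _ Hbg) as [c [Hc [_ E]]].
  rewrite E. apply SmI_mult; auto.
Qed.

Lemma SmL_Lsym al l : SmI I al -> SmL l -> SmL (Lsym al l).
Proof. intros; apply SmL_scaleT; auto; apply SmL_Dsym; auto. Qed.

Lemma SmL_vsym al n : SmI I al -> SmL (vsym al n).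
Proof.
  intros Ha; induction n; simpl.
  - intros bg [<-|[]]; auto.
  - apply SmL_Lsym; auto.
Qed.
End Coef.

Section Sem.
Variables (I : R -> Prop) (U : R -> R -> Prop) (v : R -> R -> R).
Hypothesis HI : forall x, I x -> exists e, 0 < e /\ forall y, Rabs (y - x) < e -> I y.
Hypothesis HU : open2 U.
Hypothesis Hv : smooth2_on U v.
Hypothesis HvI : forall t x, U t x -> I (v t x).

Lemma D_pDxn g t x : U t x -> derivable_pt_lim (fun y => pDxn g v t y) x (pDxn (S g) v t x).
Proof. intros Ut. apply (Sm2_dx U); auto. apply (Sm2_pDxn U); auto. Qed.

Lemma D_prod gs t x : U t x ->
  derivable_pt_lim (fun y => prod_derivs gs v t y) x (sumP (dprod gs) v t x).
Proof.
  intros Ut. induction gs as [|g gs IH]; simpl.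
  - apply D_const.
  - eapply D_ext; [intros; reflexivity| | apply D_mult; [apply D_pDxn; auto| apply IH]].
    rewrite sumP_cons. simpl. ring.
Qed.

Lemma D_ET l t x : SmL I l -> U t x ->
  derivable_pt_lim (fun y => eval_terms l v t y) x (eval_terms (Dsym l) v t x).
Proof.
  intros Hl Ut. induction l as [|bg l IH].
  - apply D_ext with (fun _ => 0) 0; [intros; reflexivity| reflexivity| apply D_const].
  - rewrite ET_Dsym_cons.
    apply D_ext with (fun y => fst bg (v t y) * prod_derivs (snd bg) v t y + eval_terms l v t y)
      (eval_terms (Dterm bg) v t x + eval_terms (Dsym l) v t x); [intros; reflexivity| reflexivity|].
    apply D_plus; [| apply IH; intros b Hb; apply Hl; right; auto].
    unfold Dterm. change (eval_terms ((derivR (fst bg), (1%nat :: snd bg)) :: map (fun gs => (fst bg, gs)) (dprod (snd bg))) v t x)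
      with (derivR (fst bg) (v t x) * prod_derivs (1%nat :: snd bg) v t x + eval_terms (map (fun gs => (fst bg, gs)) (dprod (snd bg))) v t x).
    rewrite ET_mapb.
    eapply D_ext; [intros; reflexivity| | apply D_mult; [apply D_comp; [apply (Sm2_dx U); auto| apply (SmI_der I); [apply Hl; left; auto| auto]] | apply D_prod; auto]].
    simpl. ring.
Qed.

Lemma pDx_ET W l t x : SmL I l -> U t x -> (forall s y, U s y -> W s y = eval_terms l v s y) ->
  pDx W t x = eval_terms (Dsym l) v t x.
Proof.
  intros Hl Ut HW. unfold pDx. apply derivR_eq.
  apply (loc_x U HU) with (fun s y => eval_terms l v s y); auto.
  - intros; symmetry; auto.
  - apply D_ET; auto.
Qed.

Lemma vk_vsym al n t x : SmI I al -> U t x -> vk al v (S n) t x = eval_terms (vsym al n) v t x.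
Proof.
  intros Ha. revert t x. induction n; intros t x Ut.
  - simpl. unfold Lop. ring.
  - change (vk al v (S (S n)) t x) with (al (v t x) * pDx (vk al v (S n)) t x).
    simpl vsym. unfold Lsym. rewrite ET_scaleT. f_equal.
    apply pDx_ET; auto. apply SmL_vsym; auto.
Qed.
End Sem.

Section Comm.
Variables (I : R -> Prop) (U : R -> R -> Prop) (v : R -> R -> R) (alpha a : R -> R).
Hypothesis HI : forall x, I x -> exists e, 0 < e /\ forall y, Rabs (y - x) < e -> I y.
Hypothesis HU : open2 U.
Hypothesis Hv : smooth2_on U v.
Hypothesis HvI : forall t x, U t x -> I (v t x).
Hypothesis Hal : SmI I alpha.
Hypothesis Ha : SmI I a.
Hypothesis Hpos : forall y, I y -> 0 < alpha y.
Hypothesis Heq : forall t x, U t x -> Pop alpha a v v t x = 0.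

Lemma D_fin f x l l' : derivable_pt_lim f x l -> l = l' -> derivable_pt_lim f x l'.
Proof. intros H E; subst; auto. Qed.

Lemma al_nz t x : U t x -> alpha (v t x) <> 0.
Proof. intros Ut. specialize (Hpos _ (HvI t x Ut)). lra. Qed.

Lemma Dx_comp b t x : SmI I b -> U t x ->
  derivable_pt_lim (fun y => b (v t y)) x (derivR b (v t x) * pDx v t x).
Proof. intros Hb Ut. apply D_comp; [apply (Sm2_dx U); auto| apply (SmI_der I); auto]. Qed.

Lemma Dt_comp b t x : SmI I b -> U t x ->
  derivable_pt_lim (fun s => b (v s x)) t (derivR b (v t x) * pDt v t x).
Proof. intros Hb Ut. apply D_comp; [apply (Sm2_dt U); auto| apply (SmI_der I); auto]. Qed.

Lemma pDx_Lop w t x : smooth2_on U w -> U t x ->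
  pDx (Lop alpha v w) t x = derivR alpha (v t x) * pDx v t x * pDx w t x + alpha (v t x) * pDx (pDx w) t x.
Proof.
  intros Hw Ut. unfold pDx at 1. apply derivR_eq. unfold Lop.
  eapply D_fin; [apply D_mult; [apply Dx_comp; auto| apply (Sm2_dx U); auto; apply (Sm2_pDx U); auto]|].
  cbv beta; ring.
Qed.

Lemma pDt_Lop w t x : smooth2_on U w -> U t x ->
  pDt (Lop alpha v w) t x = derivR alpha (v t x) * pDt v t x * pDx w t x + alpha (v t x) * pDt (pDx w) t x.
Proof.
  intros Hw Ut. unfold pDt at 1. apply derivR_eq. unfold Lop.
  eapply D_fin; [apply D_mult; [apply Dt_comp; auto| apply (Sm2_dt U); auto; apply (Sm2_pDx U); auto]|].
  cbv beta; ring.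
Qed.

Lemma comm w t x : smooth2_on U w -> U t x ->
  Pop alpha a v (Lop alpha v w) t x =
  alpha (v t x) * pDx (Pop alpha a v w) t x
  - (derivR a (v t x) / alpha (v t x)) * vk alpha v 1 t x * Lop alpha v w t x
  + (derivR alpha (v t x) / (alpha (v t x))^2) *
      (vk alpha v 1 t x * Lop alpha v (Lop alpha v (Lop alpha v w)) t x
       - vk alpha v 3 t x * Lop alpha v w t x).
Proof.
  intros Hw Ut.
  assert (Hn := al_nz t x Ut).
  set (Z := Lop alpha v (Lop alpha v w)).
  assert (HZ : smooth2_on U Z) by (apply (Sm2_Lop I U v); auto; apply (Sm2_Lop I U v); auto).
  assert (HL3 : smooth2_on U (Lop alpha v Z)) by (apply (Sm2_Lop I U v); auto).
  assert (E5 : pDx (pDx Z) t x = pDx (Lop alpha v Z) t x * / alpha (v t x)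
            + Lop alpha v Z t x * (- (derivR alpha (v t x) * pDx v t x) / (alpha (v t x))^2)).
  { unfold pDx at 1. apply derivR_eq.
    apply (loc_x U HU) with (fun s y => Lop alpha v Z s y * / alpha (v s y)); auto.
    - intros s y Usy. unfold Lop at 1. field. apply al_nz; auto.
    - eapply D_fin; [apply D_mult; [apply (Sm2_dx U); auto| apply D_inv; [apply Dx_comp; auto| auto]]|].
      cbv beta; ring. }
  assert (E4 : pDx (Pop alpha a v w) t x =
     pDx (pDt w) t x + (derivR a (v t x) * pDx v t x * pDx w t x + a (v t x) * pDx (pDx w) t x)
     + pDx (pDx Z) t x).
  { unfold pDx at 1. apply derivR_eq. unfold Pop.
    apply D_plus; [apply D_plus|].
    - apply (Sm2_dx U); auto. apply (Sm2_pDt U); auto.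
    - eapply D_fin; [apply D_mult; [apply Dx_comp; auto| apply (Sm2_dx U); auto; apply (Sm2_pDx U); auto]|]. cbv beta; ring.
    - apply (Sm2_dx U); auto. apply (Sm2_pDx U); auto. }
  assert (E8 := schwarz_U U w t x HU Hw Ut).
  assert (E6 := Heq t x Ut). unfold Pop in E6.
  rewrite E4, E5. unfold Pop at 1. rewrite pDt_Lop, pDx_Lop, E8; auto.
  unfold Z in *. unfold vk. simpl Nat.iter.
  set (L3 := Lop alpha v (Lop alpha v (Lop alpha v w)) t x).
  set (dL3 := pDx (Lop alpha v (Lop alpha v (Lop alpha v w))) t x).
  set (P2v := pDx (Lop alpha v (Lop alpha v v)) t x) in *.
  change (Lop alpha v (Lop alpha v (Lop alpha v v)) t x) with (alpha (v t x) * P2v).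
  change (Lop alpha v v t x) with (alpha (v t x) * pDx v t x).
  change (Lop alpha v w t x) with (alpha (v t x) * pDx w t x).
  replace (pDt v t x) with (- (a (v t x) * pDx v t x) - P2v) by lra.
  field. auto.
Qed.
End Comm.

Section Sym.
Variables (alpha a : R -> R).
Definition phi y := derivR alpha y / (alpha y)^2.
Definition ck (k : nat) := (INR k - 1) * (INR k - 2) / 2.
Definition dk (k : nat) := match k with 0%nat | 1%nat => 0 | _ => 1 end.
Definition v1s := vsym alpha 0.
Definition v2s := vsym alpha 1.
Definition v3s := vsym alpha 2.
Definition Gsym (k : nat) : list Term :=
  match k with
  | 0%nat | 1%nat => nil
  | _ => scaleT (fun _ => ck k) (scaleT (derivR phi) (mulT v1s v1s) ++ scaleT phi v2s)
         ++ scaleT (fun y => - phi y) v2s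
  end.
Definition H1 := scaleT (fun y => - (derivR a y / alpha y)) (mulT v1s v1s).
Definition Hx (k : nat) : list Term :=
  match k with 0%nat | 1%nat => nil | _ => scaleT (fun y => - phi y) (mulT v3s (vsym alpha k)) end.
Definition Hstep (k : nat) (Hk : list Term) : list Term :=
  mulT (Lsym alpha (Gsym k)) (vsym alpha k) ++ Lsym alpha Hk
  ++ scaleT (fun y => - (derivR a y / alpha y)) (mulT v1s (vsym alpha k))
  ++ Hx k.
Fixpoint Hsym (k : nat) : list Term :=
  match k with
  | 0%nat => nil
  | S k' => match k' with 0%nat => H1 | S _ => Hstep k' (Hsym k') end
  end.
End Sym.

Definition WBH (k : nat) (l : list Term) :=
  forall bg, In bg l -> (weight (snd bg) = (k + 1)%nat \/ weight (snd bg) = (k + 3)%nat) /\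
    forall g, In g (snd bg) -> (1 <= g <= k)%nat.

Lemma WBH_app k l1 l2 : WBH k l1 -> WBH k l2 -> WBH k (l1 ++ l2).
Proof. intros H1 H2 bg H. apply in_app_or in H; destruct H; auto. Qed.

Lemma WBw_WBH k w m l : WBw w m l -> (w = k + 1 \/ w = k + 3)%nat -> (m <= k)%nat -> WBH k l.
Proof.
  intros H Hw Hm bg Hbg. destruct (H bg Hbg) as [W G]. split; [lia|].
  intros g Hg; specialize (G g Hg); lia.
Qed.

Lemma WBH_Lsym al k l : WBH k l -> WBH (S k) (Lsym al l).
Proof.
  intros H bg Hbg. unfold Lsym in Hbg. apply In_scaleT in Hbg. destruct Hbg as [c [Hc [Es _]]].
  rewrite Es. destruct (In_Dsym _ _ Hc) as [b [Hb [Hw [Hg _]]]].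
  destruct (H b Hb) as [Hwb Hgb]. split; [lia|].
  intros g Hg1. destruct (Hg g Hg1) as [->|[g0 [Hg0 [->| ->]]]]; [lia| |]; specialize (Hgb g0 Hg0); lia.
Qed.

Lemma WBw_mono w m m' l : WBw w m l -> (m <= m')%nat -> WBw w m' l.
Proof. intros H Hm bg Hbg. destruct (H bg Hbg) as [W G]. split; auto. intros g Hg; specialize (G g Hg); lia. Qed.

Lemma WBw_app w m l1 l2 : WBw w m l1 -> WBw w m l2 -> WBw w m (l1 ++ l2).
Proof. intros H1 H2 bg H. apply in_app_or in H; destruct H; auto. Qed.

Lemma WBw_Gsym al k : (2 <= k)%nat -> WBw 2 2 (Gsym al k).
Proof.
  intros Hk. destruct k as [|[|k]]; try lia. cbv beta iota delta [Gsym].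
  apply WBw_app; [apply WBw_scaleT; apply WBw_app|].
  - apply WBw_scaleT. apply (WBw_mulT 1 1 1 1 2); try lia; apply WBw_vsym.
  - apply WBw_scaleT. apply (WBw_vsym al 1).
  - apply WBw_scaleT. apply (WBw_vsym al 1).
Qed.

Lemma WBH_Hsym al a k : (1 <= k)%nat -> WBH k (Hsym al a k).
Proof.
  induction k as [|k IH]; intros Hk; [lia|].
  destruct k as [|k].
  - simpl. unfold H1. eapply WBw_WBH; [apply WBw_scaleT; apply (WBw_mulT 1 1 1 1 1); try lia; apply WBw_vsym| lia| lia].
  - change (Hsym al a (S (S k))) with (Hstep al a (S k) (Hsym al a (S k))).
    specialize (IH ltac:(lia)). unfold Hstep.
    apply WBH_app; [|apply WBH_app; [|apply WBH_app]].
    + destruct k as [|k].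
      * simpl. intros bg Hbg. unfold mulT in Hbg. simpl in Hbg. destruct Hbg.
      * eapply WBw_WBH; [apply (WBw_mulT 3 (S (S (S k))) 3 (S (S (S k))) (S (S (S k))));
          [apply WBw_Lsym; apply WBw_Gsym; lia| apply WBw_vsym| lia| lia]| lia| lia].
    + apply WBH_Lsym; auto.
    + eapply WBw_WBH; [apply WBw_scaleT; apply (WBw_mulT 1 (S (S k)) 1 (S (S k)) (S (S k))); try lia; apply WBw_vsym| lia| lia].
    + destruct k as [|k].
      * simpl. intros bg [].
      * eapply WBw_WBH; [apply WBw_scaleT; apply (WBw_mulT 3 (S (S (S k))) 3 (S (S (S k))) (S (S (S k)))); try lia; apply WBw_vsym| lia| lia].
Qed.

Section Main.
Variables (I : R -> Prop) (U : R -> R -> Prop) (v : R -> R -> R) (alpha a : R -> R).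
Hypothesis HI : forall x, I x -> exists e, 0 < e /\ forall y, Rabs (y - x) < e -> I y.
Hypothesis HU : open2 U.
Hypothesis Hv : smooth2_on U v.
Hypothesis HvI : forall t x, U t x -> I (v t x).
Hypothesis Hal : SmI I alpha.
Hypothesis Ha : SmI I a.
Hypothesis Hpos : forall y, I y -> 0 < alpha y.
Hypothesis Heq : forall t x, U t x -> Pop alpha a v v t x = 0.

Lemma nzI y : I y -> alpha y <> 0.
Proof. intros Iy; specialize (Hpos y Iy); lra. Qed.

Lemma SmI_phi : SmI I (phi alpha).
Proof.
  apply SmI_ext with (fun y => derivR alpha y * (/ alpha y * / alpha y)); auto.
  - apply SmI_mult; auto; [apply SmI_derivR; auto| apply SmI_mult; auto; apply SmI_inv; auto; apply nzI].
  - intros y Iy. unfold phi. field. apply nzI; auto.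
Qed.

Lemma SmI_aa : SmI I (fun y => - (derivR a y / alpha y)).
Proof.
  apply SmI_ext with (fun y => -1 * (derivR a y * / alpha y)); auto.
  - apply SmI_scal; auto. apply SmI_mult; auto; [apply SmI_derivR; auto| apply SmI_inv; auto; apply nzI].
  - intros y Iy. unfold Rdiv. ring.
Qed.

Lemma SmI_mphi : SmI I (fun y => - phi alpha y).
Proof. apply SmI_opp; auto; apply SmI_phi. Qed.

Lemma SmL_Gsym k : SmL I (Gsym alpha k).
Proof.
  destruct k as [|[|k]]; [intros bg []| intros bg []|].
  cbv beta iota delta [Gsym].
  apply SmL_app.
  - apply SmL_scaleT; auto; [apply (SmI_const I (ck (S (S k))))|].
    apply SmL_app; apply SmL_scaleT; auto.
    + apply SmI_derivR; auto; apply SmI_phi.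
    + apply SmL_mulT; auto; apply SmL_vsym; auto.
    + apply SmI_phi.
    + apply SmL_vsym; auto.
  - apply SmL_scaleT; auto; [apply SmI_mphi| apply SmL_vsym; auto].
Qed.

Lemma SmL_Hsym k : SmL I (Hsym alpha a k).
Proof.
  induction k as [|k IH]; [intros bg []|].
  destruct k as [|k].
  - simpl. unfold H1. apply SmL_scaleT; auto; [apply SmI_aa| apply SmL_mulT; auto; apply SmL_vsym; auto].
  - change (Hsym alpha a (S (S k))) with (Hstep alpha a (S k) (Hsym alpha a (S k))).
    unfold Hstep. repeat apply SmL_app.
    + apply SmL_mulT; auto; [apply SmL_Lsym; auto; apply SmL_Gsym| apply SmL_vsym; auto].
    + apply SmL_Lsym; auto.
    + apply SmL_scaleT; auto; [apply SmI_aa| apply SmL_mulT; auto; apply SmL_vsym; auto].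
    + destruct k as [|k]; [intros bg []|].
      apply SmL_scaleT; auto; [apply SmI_mphi| apply SmL_mulT; auto; apply SmL_vsym; auto].
Qed.

Lemma ETv n t x : U t x -> eval_terms (vsym alpha n) v t x = vk alpha v (S n) t x.
Proof. intros Ut. symmetry. apply (vk_vsym I U); auto. Qed.

Lemma ET_G k t x : (1 <= k)%nat -> U t x -> eval_terms (Gsym alpha k) v t x =
  ck k * (derivR (phi alpha) (v t x) * vk alpha v 1 t x * vk alpha v 1 t x
          + phi alpha (v t x) * vk alpha v 2 t x) - dk k * phi alpha (v t x) * vk alpha v 2 t x.
Proof.
  intros Hk Ut. destruct k as [|[|k]]; [lia| |].
  - unfold ck, dk. simpl. field.
  - cbv beta iota delta [Gsym]. rewrite !ET_app, !ET_scaleT, !ET_app, !ET_scaleT, ET_mulT.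
    unfold v1s, v2s. rewrite !ETv; auto. unfold dk. ring.
Qed.

Lemma Qk k : (1 <= k)%nat -> forall t x, U t x ->
  Pop alpha a v (vk alpha v k) t x =
  (INR k - 1) * phi alpha (v t x) * vk alpha v 1 t x * vk alpha v (S (S k)) t x
  + eval_terms (Gsym alpha k) v t x * vk alpha v (S k) t x + eval_terms (Hsym alpha a k) v t x.
Proof.
  induction k as [|k IH]; intros Hk t x Ut; [lia|].
  assert (Hn : alpha (v t x) <> 0) by (apply nzI; auto).
  assert (EL : Pop alpha a v (vk alpha v (S k)) t x = Pop alpha a v (Lop alpha v (vk alpha v k)) t x) by reflexivity.
  rewrite EL. clear EL.
  rewrite (comm I U v alpha a HI HU Hv HvI Hal Ha Hpos Heq (vk alpha v k) t x); [|apply (Sm2_vk I U v); auto| auto].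
  destruct k as [|k].
  - assert (E0 : pDx (Pop alpha a v (vk alpha v 0)) t x = 0).
    { unfold pDx at 1. apply derivR_eq. apply (loc_x U HU) with (fun _ _ => 0); auto.
      - intros s y Usy. symmetry. apply Heq; auto.
      - apply D_const. }
    rewrite E0. simpl Hsym. simpl Gsym. unfold H1. rewrite ET_scaleT, ET_mulT. unfold v1s. rewrite ETv; auto.
    change (Lop alpha v (vk alpha v 0) t x) with (vk alpha v 1 t x).
    change (Lop alpha v (Lop alpha v (Lop alpha v (vk alpha v 0))) t x) with (vk alpha v 3 t x).
    unfold phi. simpl INR. simpl eval_terms. field. auto.
  - specialize (IH ltac:(lia)).
    set (G := Gsym alpha (S k)) in *. set (H := Hsym alpha a (S k)) in *.
    assert (SG : SmL I G) by apply SmL_Gsym.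
    assert (SH : SmL I H) by apply SmL_Hsym.
    assert (ED : pDx (Pop alpha a v (vk alpha v (S k))) t x =
      ((0 * phi alpha (v t x) + (INR (S k) - 1) * (derivR (phi alpha) (v t x) * pDx v t x)) * vk alpha v 1 t x
        + (INR (S k) - 1) * phi alpha (v t x) * pDx (vk alpha v 1) t x) * vk alpha v (S (S (S k))) t x
      + (INR (S k) - 1) * phi alpha (v t x) * vk alpha v 1 t x * pDx (vk alpha v (S (S (S k)))) t x
      + (eval_terms (Dsym G) v t x * vk alpha v (S (S k)) t x + eval_terms G v t x * pDx (vk alpha v (S (S k))) t x)
      + eval_terms (Dsym H) v t x).
    { unfold pDx at 1. apply derivR_eq.
      apply (loc_x U HU) with (fun s y => (INR (S k) - 1) * phi alpha (v s y) * vk alpha v 1 s y * vk alpha v (S (S (S k))) s y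
        + eval_terms G v s y * vk alpha v (S (S k)) s y + eval_terms H v s y); auto.
      - intros s y Usy. symmetry. apply IH; auto.
      - eapply D_fin.
        + apply D_plus; [apply D_plus|].
          * apply D_mult.
            -- apply D_mult.
               ++ apply D_mult; [apply D_const| apply (Dx_comp I U v); auto; apply SmI_phi].
               ++ apply (Sm2_dx U); auto. apply (Sm2_vk I U v); auto.
            -- apply (Sm2_dx U); auto. apply (Sm2_vk I U v); auto.
          * apply D_mult; [apply (D_ET I U v); auto| apply (Sm2_dx U); auto; apply (Sm2_vk I U v); auto].
          * apply (D_ET I U v); auto.
        + cbv beta. ring. }
    rewrite ED. clear ED.
    change (Hsym alpha a (S (S k))) with (Hstep alpha a (S k) H).
    unfold Hstep. rewrite !ET_app, ET_mulT. unfold Lsym. rewrite !ET_scaleT, ET_mulT.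
    unfold v1s. rewrite !ETv; auto. fold G.
    rewrite (ET_G (S (S k))) by (auto; lia). unfold G. rewrite (ET_G (S k)) by (auto; lia).
    change (Lop alpha v (vk alpha v (S k)) t x) with (vk alpha v (S (S k)) t x).
    change (Lop alpha v (Lop alpha v (Lop alpha v (vk alpha v (S k)))) t x) with (vk alpha v (S (S (S (S k)))) t x).
    replace (pDx v t x) with (vk alpha v 1 t x / alpha (v t x))
      by (change (vk alpha v 1 t x) with (alpha (v t x) * pDx v t x); field; auto).
    replace (pDx (vk alpha v 1) t x) with (vk alpha v 2 t x / alpha (v t x))
      by (change (vk alpha v 2 t x) with (alpha (v t x) * pDx (vk alpha v 1) t x); field; auto).
    replace (pDx (vk alpha v (S (S (S k)))) t x) with (vk alpha v (S (S (S (S k)))) t x / alpha (v t x))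
      by (change (vk alpha v (S (S (S (S k)))) t x) with (alpha (v t x) * pDx (vk alpha v (S (S (S k)))) t x); field; auto).
    replace (pDx (vk alpha v (S (S k))) t x) with (vk alpha v (S (S (S k))) t x / alpha (v t x))
      by (change (vk alpha v (S (S (S k))) t x) with (alpha (v t x) * pDx (vk alpha v (S (S k))) t x); field; auto).
    destruct k as [|k].
    + replace (eval_terms (Hx alpha 1) v t x) with 0 by reflexivity.
      replace (eval_terms (Dsym (Gsym alpha 1)) v t x) with 0 by reflexivity.
      unfold ck, dk, phi. simpl INR. field. auto.
    + unfold Hx. rewrite ET_scaleT, ET_mulT. unfold v3s. rewrite !ETv; auto.
      unfold ck, dk, phi. rewrite !S_INR. field. auto.
Qed.
End Main.

Lemma sm_to_SmI I f : smooth_on I f -> SmI I f.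
Proof.
  intros [S [Sf HS]]. exists S; split; auto. intros g Sg. destruct (HS g Sg) as [H _]; auto.
Qed.

Theorem mainTheorem3 :
  forall (I : R -> Prop) (alpha a : R -> R),
    is_open_interval I ->
    smooth_on I alpha -> (forall y, I y -> 0 < alpha y) ->
    smooth_on I a ->
    forall k : nat, (1 <= k)%nat ->
    exists (A B : R -> R) (terms : list ((R -> R) * list nat)),
      (forall y, I y -> continuity_pt A y) /\
      (forall y, I y -> continuity_pt B y) /\
      (forall bg, In bg terms ->
         (forall y, I y -> continuity_pt (fst bg) y) /\
         (forall g, In g (snd bg) -> (1 <= g <= k)%nat) /\
         (weight (snd bg) = (k + 1)%nat \/ weight (snd bg) = (k + 3)%nat)) /\
      forall (U : R -> R -> Prop) (v : R -> R -> R),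
        open2 U ->
        smooth2_on U v ->
        (forall t x, U t x -> I (v t x)) ->
        (forall t x, U t x -> Pop alpha a v v t x = 0) ->
        forall t x, U t x ->
          let f := (INR k - 1) * derivR alpha (v t x) * vk alpha v 1 t x in
          let g := A (v t x) * (vk alpha v 1 t x) ^ 2
                   + B (v t x) * vk alpha v 2 t x in
          let h := eval_terms terms v t x in
          Pop alpha a v (vk alpha v k) t x
          = f * pDx (pDx (vk alpha v k)) t x
            + g * pDx (vk alpha v k) t x + h.
Proof.
  intros I alpha a HIo Hsal Hpos Hsa k Hk.
  assert (HI := proj2 HIo).
  assert (Hal := sm_to_SmI I alpha Hsal). assert (Ha := sm_to_SmI I a Hsa).
  assert (Hnz : forall y, I y -> alpha y <> 0) by (intros y Iy; specialize (Hpos y Iy); lra).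
  assert (Hphi := SmI_phi I alpha HI Hal Hpos).
  exists (fun y => (INR k - 1) * (derivR alpha y * derivR alpha y * (/ alpha y * / alpha y))
                   + alpha y * ck k * derivR (phi alpha) y).
  exists (fun y => alpha y * ck k * phi alpha y - dk k * alpha y * phi alpha y).
  exists (Hsym alpha a k).
  split; [|split; [|split]].
  - intros y Iy. apply (SmI_cont I); auto.
    apply SmI_plus; auto.
    + apply SmI_scal; auto. apply SmI_mult; auto.
      * apply SmI_mult; auto; apply SmI_derivR; auto.
      * apply SmI_mult; auto; apply SmI_inv; auto.
    + apply SmI_mult; auto; [apply SmI_mult; auto; apply SmI_const| apply SmI_derivR; auto].
  - intros y Iy. apply (SmI_cont I); auto.
    apply SmI_ext with (fun y => alpha y * ck k * phi alpha y + (- dk k) * (alpha y * phi alpha y)); auto.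
    + apply SmI_plus; auto.
      * apply SmI_mult; auto. apply SmI_mult; auto. apply SmI_const.
      * apply SmI_scal; auto. apply SmI_mult; auto.
    + intros; ring.
  - intros bg Hbg. destruct (WBH_Hsym alpha a k Hk bg Hbg) as [W G]. split; [|split; auto].
    intros y Iy. apply (SmI_cont I); auto. apply (SmL_Hsym I alpha a HI Hal Ha Hpos k); auto.
  - intros U v HU Hv HvI Heq t x Ut. cbv zeta.
    assert (Hn : alpha (v t x) <> 0) by (apply Hnz; auto).
    rewrite (Qk I U v alpha a HI HU Hv HvI Hal Ha Hpos Heq k Hk t x Ut).
    rewrite (ET_G I U v alpha) by auto.
    change (vk alpha v (S (S k)) t x) with (alpha (v t x) * pDx (Lop alpha v (vk alpha v k)) t x).
    rewrite (pDx_Lop I U v alpha) by (auto; apply (Sm2_vk I U v); auto).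
    change (vk alpha v (S k) t x) with (alpha (v t x) * pDx (vk alpha v k) t x).
    change (vk alpha v 1 t x) with (alpha (v t x) * pDx v t x).
    unfold phi. field. auto.
Qed.
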